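(* Let $E$ be a real Banach space, $K\subset E$ nonempty closed convex, $Y$ a real Banach space containing a closed, convex, pointed cone $C$ with nonempty interior, $f:E\times E\to Y$, $T:K\to\mathcal P(K)$, and $g\in\mathcal F$ satisfying H1–H4, with B1–B4 holding. For Algorithm SEML, at any iteration $k$ at which $v^k$ is defined and the algorithm does not stop: (i) $\ell(k)$ is well defined (the Armijo-type search for $\alpha_k$ terminates after finitely many steps), and consequently $y^k$ is well defined; (ii) if $x^k\neq z^k$, then $f(y^k,x^k)\notin-C$.
   Context: $C^+=\{z\in Y^*:\langle y,z\rangle\ge0\ \forall y\in C\}$; $y\preceq y'$ iff $y'-y\in C$; $C$-convex: $G(tx+(1-t)y)\preceq tG(x)+(1-t)G(y)$. $\mathcal F$: functions $g:E\to\mathbb R$ strictly convex, lower semicontinuous, Gâteaux differentiable with derivative $g'$. $D_g(x,y)=g(x)-g(y)-\langle x-y,g'(y)\rangle$; $v_g(x,t)=\inf\{D_g(y,x):\|y-x\|=t\}$. H1: level sets of $D_g(x,\cdot)$ bounded; H2: $\inf_{x\in A}v_g(x,t)>0$ for $t>0$, bounded $A$; H3: $g'$ uniformly continuous on bounded sets; H4: $\lim_{\|x\|\to\infty}(g(x)-\rho\|x-z\|)=\infty$ for all $z$, $\rho>0$. $\Pi^g_D(x)$: unique minimizer of $D_g(\cdot,x)$ over nonempty closed convex $D$. B1: $f(x,x)=0$. B2: $f$ uniformly continuous on bounded subsets of $E\times E$. B3: $f(x,\cdot)$ $C$-convex. B4: $T$ has nonempty closed convex values, is demiclosed ($x^k\rightharpoonup\bar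 x$, $d(x^k,T(x^k))\to0\Rightarrow\bar x\in T(\bar x)$), lower semicontinuous at each $\bar x\in K$ ($x^k\to\bar x$, $\bar y\in T(\bar x)\Rightarrow\exists y^k\in T(x^k)$, $y^k\to\bar y$), quasi $D_g$-nonexpansive ($S(x)=\Pi^g_{T(x)}(x)$ has a fixed point and $D_g(p,S(x))\le D_g(p,x)$ for all fixed points $p$ of $S$ and $x\in K$). $\mathrm{argmin}^C_w\{G(y):y\in Q\}$: $a\in Q$ with no $y\in Q$ such that $G(a)-G(y)\in\mathrm{int}(C)$. Algorithm SEML: parameters $v^0\in K$, $\delta,\theta\in(0,1)$, $\{\beta_k\}\subset[\hat\beta,\tilde\beta]$ with $0<\hat\beta\le\tilde\beta$, $\{\gamma_k\}\subset[\varepsilon,1]$, $\varepsilon\in(0,1]$, $\{e^k\}\subset\mathrm{int}(C)$, $e^k\to\bar e\in\mathrm{int}(C)$. Given $v^k$: $x^k=\Pi^g_{T(v^k)}(v^k)$; $z^k\in\mathrm{argmin}^C_w\{\beta_kf(x^k,y)+g(y)e^k-\langle y,g'(x^k)\rangle e^k:y\in T(v^k)\}$; stop if $z^k=v^k$; else $\ell(k)=\min\{\ell\ge0:-\beta_kf(y^\ell,x^k)+\beta_kf(y^\ell,z^k)+\delta D_g(z^k,x^k)e^k\notin\mathrm{int}(C)\}$, $y^\ell=\theta^\ell z^k+(1-\theta^\ell)x^k$; $\alpha_k=\theta^{\ell(k)}$; $y^k=\alpha_kz^k+(1-\alpha_k)x^k$; $H_k=\{y:f(y^k,y)\in-C\}$;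 $K_0=K\cap H_0$, $K_k=K_{k-1}\cap H_k$; $w^k=\Pi^g_{K_k}(x^k)$; $v^{k+1}=\Pi^g_{L_k\cap M_k\cap N_k}(v^0)$ with $L_k=\{z:\langle z-x^k,g'(x^k)-g'(w^k)\rangle\le-\gamma_kD_g(x^k,w^k)\}$, $M_k=\{z:\langle z-v^k,g'(v^k)-g'(x^k)\rangle\le-\gamma_kD_g(v^k,x^k)\}$, $N_k=\{z:\langle z-v^k,g'(v^0)-g'(v^k)\rangle\le0\}$. *)

(* Defs.v *)
From HB Require Import structures.
From mathcomp Require Import all_boot all_order all_algebra.
From mathcomp Require Import all_classical all_reals all_analysis.
Import Order.TTheory GRing.Theory Num.Theory.
Import numFieldNormedType.Exports.
Local Open Scope classical_set_scope.
Local Open Scope ring_scope.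

Set Implicit Arguments.
Unset Strict Implicit.
Unset Printing Implicit Defensive.

Definition cvx_set {R : realType} {V : normedModType R} (A : set V) : Prop :=
  forall (x y : V) (t : R), A x -> A y -> 0 <= t <= 1 ->
    A (t *: x + (1 - t) *: y).

Definition bnd {R : realType} {V : normedModType R} (A : set V) : Prop :=
  exists M : R, forall y, A y -> `|y| <= M.

Definition is_clin {R : realType} {V : normedModType R} (phi : V -> R) : Prop :=
  (forall (a : R) (u v : V), phi (a *: u + v) = a * phi u + phi v)
  /\ continuous phi.

Definition wcvg {R : realType} {V : normedModType R} (u : nat -> V) (x : V) : Prop :=
  forall phi : V -> R, is_clin phi -> (fun n => phi (u n)) @ \oo --> phi x.

Definition good_cone {R : realType} {Y : normedModType R} (C : set Y) : Prop :=
  [/\ closed C, cvx_set C,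
      (forall (t : R) (y : Y), 0 <= t -> C y -> C (t *: y)),
      (forall y, C y -> C (- y) -> y = 0)
    & exists y, interior C y].

(* G is C-convex: G(tx+(1-t)y) ≼ tG(x)+(1-t)G(y), with a ≼ b iff b - a ∈ C *)
Definition C_convex {R : realType} {E Y : normedModType R}
    (C : set Y) (G : E -> Y) : Prop :=
  forall (x y : E) (t : R), 0 <= t <= 1 ->
    C (t *: G x + (1 - t) *: G y - G (t *: x + (1 - t) *: y)).

Definition argminw {R : realType} {E Y : normedModType R}
    (C : set Y) (G : E -> Y) (Q : set E) (a : E) : Prop :=
  Q a /\ ~ (exists y, Q y /\ interior C (G a - G y)).

(* g' x is the Gateaux derivative of g at x; <y, g'(x)> is written g' x y *)
Definition class_F {R : realType} {E : normedModType R}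
    (g : E -> R) (g' : E -> E -> R) : Prop :=
  [/\
      (forall (x y : E) (t : R), x <> y -> 0 < t < 1 ->
          g (t *: x + (1 - t) *: y) < t * g x + (1 - t) * g y),
      (forall (x : E) (eps : R), 0 < eps -> \forall y \near x, g x - eps < g y),
      (forall x, is_clin (g' x))
    &
      (forall x h : E,
          (fun t : R => t^-1 * (g (x + t *: h) - g x)) @ (0 : R)^' --> g' x h)].

Definition Dg {R : realType} {E : normedModType R}
    (g : E -> R) (g' : E -> E -> R) (x y : E) : R :=
  g x - g y - g' y (x - y).

Definition H1 {R : realType} {E : normedModType R} (g : E -> R) (g' : E -> E -> R) :=
  forall (x : E) (r : R), bnd [set y | Dg g g' x y <= r].

(* inf_{x ∈ A} v_g(x,t) > 0, written out as a positive uniform lower bound *)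
Definition H2 {R : realType} {E : normedModType R} (g : E -> R) (g' : E -> E -> R) :=
  forall (A : set E) (t : R), bnd A -> 0 < t ->
    exists c : R, 0 < c /\
      forall x y, A x -> `|y - x| = t -> c <= Dg g g' y x.

(* g' uniformly continuous on bounded sets (w.r.t. the dual norm) *)
Definition H3 {R : realType} {E : normedModType R} (g : E -> R) (g' : E -> E -> R) :=
  forall (A : set E), bnd A -> forall eps : R, 0 < eps ->
    exists d : R, 0 < d /\
      forall x y, A x -> A y -> `|x - y| < d ->
        forall h, `|g' x h - g' y h| <= eps * `|h|.

Definition H4 {R : realType} {E : normedModType R} (g : E -> R) (g' : E -> E -> R) :=
  forall (z : E) (rho : R), 0 < rho -> forall M : R, exists N : R,
    forall x, N <= `|x| -> M <= g x - rho * `|x - z|.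

Definition is_bproj {R : realType} {E : normedModType R}
    (g : E -> R) (g' : E -> E -> R) (D : set E) (x p : E) : Prop :=
  D p /\ forall y, D y -> Dg g g' p x <= Dg g g' y x.

Definition B2 {R : realType} {E Y : normedModType R} (f : E -> E -> Y) : Prop :=
  forall (A : set E), bnd A -> forall eps : R, 0 < eps ->
    exists d : R, 0 < d /\
      forall x1 y1 x2 y2, A x1 -> A y1 -> A x2 -> A y2 ->
        `|x1 - x2| < d -> `|y1 - y2| < d -> `|f x1 y1 - f x2 y2| < eps.

Definition B4 {R : realType} {E : normedModType R}
    (K : set E) (T : E -> set E) (g : E -> R) (g' : E -> E -> R) : Prop :=
  [/\
      (forall x, K x -> [/\ T x !=set0, closed (T x), cvx_set (T x) & T x `<=` K]),
      (forall (u : nat -> E) (xb : E), (forall n, K (u n)) -> wcvg u xb ->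
         (forall eps : R, 0 < eps ->
            \forall n \near \oo, exists s, T (u n) s /\ `|u n - s| < eps) ->
         T xb xb),
      (forall xb, K xb -> forall u : nat -> E, (forall n, K (u n)) ->
         u @ \oo --> xb -> forall yb, T xb yb ->
         exists w : nat -> E, (forall n, T (u n) (w n)) /\ w @ \oo --> yb)
    &
      ((exists p, K p /\ is_bproj g g' (T p) p p) /\
       (forall p, K p -> is_bproj g g' (T p) p p ->
          forall x s, K x -> is_bproj g g' (T x) x s ->
            Dg g g' p s <= Dg g g' p x))].

Definition ypt {R : realType} {E : normedModType R} (theta : R) (x z : E) (l : nat) : E :=
  theta ^+ l *: z + (1 - theta ^+ l) *: x.

Definition armijo {R : realType} {E Y : normedModType R}
    (C : set Y) (f : E -> E -> Y) (g : E -> R) (g' : E -> E -> R)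
    (beta delta theta : R) (e : Y) (x z : E) (l : nat) : Prop :=
  ~ interior C (- (beta *: f (ypt theta x z l) x) + beta *: f (ypt theta x z l) z
                 + (delta * Dg g g' z x) *: e).

Definition zobj {R : realType} {E Y : normedModType R}
    (f : E -> E -> Y) (g : E -> R) (g' : E -> E -> R)
    (beta : R) (e : Y) (x : E) : E -> Y :=
  fun y => beta *: f x y + g y *: e - g' x y *: e.

(* the iterates v^0,...,v^k were produced by SEML: every iteration j < k was
   carried out completely (and did not stop), and the data at iteration k
   (v^k ∈ K, x^k, z^k with z^k ≠ v^k) were computed. *)
Definition seml_upto {R : realType} {E Y : normedModType R}
    (K : set E) (C : set Y) (f : E -> E -> Y) (T : E -> set E)
    (g : E -> R) (g' : E -> E -> R)
    (v0 : E) (delta theta : R) (beta gamma : nat -> R) (e : nat -> Y)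
    (v x z y w : nat -> E) (ell : nat -> nat) (k : nat) : Prop :=
  v 0%N = v0 /\
  (forall j : nat, (j <= k)%N ->
     [/\ K (v j),
         is_bproj g g' (T (v j)) (v j) (x j),
         argminw C (zobj f g g' (beta j) (e j) (x j)) (T (v j)) (z j)
       & z j <> v j]) /\
  (forall j : nat, (j < k)%N ->
     [/\ armijo C f g g' (beta j) delta theta (e j) (x j) (z j) (ell j),
         (forall l, (l < ell j)%N ->
            ~ armijo C f g g' (beta j) delta theta (e j) (x j) (z j) l),
         y j = ypt theta (x j) (z j) (ell j),
         is_bproj g g' [set u | K u /\ forall i, (i <= j)%N -> C (- f (y i) u)]
                  (x j) (w j)
       &
         is_bproj g g'
           [set u | [/\ g' (x j) (u - x j) - g' (w j) (u - x j)
                          <= - (gamma j * Dg g g' (x j) (w j)),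
                        g' (v j) (u - v j) - g' (x j) (u - v j)
                          <= - (gamma j * Dg g g' (v j) (x j))
                      & g' v0 (u - v j) - g' (v j) (u - v j) <= 0]]
           v0 (v j.+1)]).

(* Main.v *)
Require Import Defs.
Set Warnings "-all".
From HB Require Import structures.
From mathcomp Require Import all_boot all_order all_algebra.
From mathcomp Require Import all_classical all_reals all_analysis.
From mathcomp Require Import ring lra.
Import Order.TTheory GRing.Theory Num.Theory.
Import numFieldNormedType.Exports.
Local Open Scope classical_set_scope.
Local Open Scope ring_scope.
Lemma nbhsNP (R : realType) (Y : normedModType R) (x : Y) (A : set Y) :
  nbhs x A <-> exists2 r : R, 0 < r & forall y, `|x - y| < r -> A y.
Proof.
have -> : nbhs x A = (\near x, A x) by [].
rewrite -nbhs_normE. split.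
- by case=> r r0 H; exists r.
- by case=> r r0 H; exists r.
Qed.

Lemma cone_add (R : realType) (Y : normedModType R) (C : set Y) a b :
  good_cone C -> C a -> C b -> C (a + b).
Proof.
case=> _ cv sc _ _ Ca Cb.
have h : C (2^-1 *: a + (1 - 2^-1) *: b).
  apply: cv => //; apply/andP; split; first by rewrite invr_ge0.
  by rewrite invf_le1 // ler1n.
have := sc 2 _ (ler0n _ 2) h.
have -> : (1 - 2^-1 : R) = 2^-1.
  by field.
by rewrite scalerDr !scalerA divff // !scale1r.
Qed.

Lemma int_add (R : realType) (Y : normedModType R) (C : set Y) a c :
  good_cone C -> C a -> interior C c -> interior C (a + c).
Proof.
move=> gC Ca; rewrite /interior => /nbhsNP [r r0 H]; apply/nbhsNP; exists r => // y Hy.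
have -> : y = a + (y - a) by rewrite addrC subrK.
have Cy : C (y - a).
  apply: H; have -> : c - (y - a) = a + c - y.
    by rewrite opprB addrA [c + a]addrC.
  done.
exact: cone_add.
Qed.

Lemma int_scale (R : realType) (Y : normedModType R) (C : set Y) s c :
  good_cone C -> 0 < s -> interior C c -> interior C (s *: c).
Proof.
case=> _ _ sc _ _ s0; rewrite /interior => /nbhsNP [r r0 H]; apply/nbhsNP.
exists (s * r); first exact: mulr_gt0.
move=> y Hy.
have -> : y = s *: (s^-1 *: y) by rewrite scalerA divff ?gt_eqF // scale1r.
apply: sc; first exact: ltW.
apply: H.
have -> : c - s^-1 *: y = s^-1 *: (s *: c - y).
  by rewrite scalerBr scalerA mulVf ?gt_eqF // scale1r.
rewrite normrZ gtr0_norm ?invr_gt0 //.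
by rewrite ltr_pdivrMl // .
Qed.


Lemma clin_B (R : realType) (E : normedModType R) (phi : E -> R) u v :
  is_clin phi -> phi (u - v) = phi u - phi v.
Proof.
case=> L _. have := L (-1) v u. rewrite scaleN1r mulN1r => H.
by rewrite addrC H addrC.
Qed.

Lemma clin_0 (R : realType) (E : normedModType R) (phi : E -> R) :
  is_clin phi -> phi 0 = 0.
Proof.
move=> hc; have := @clin_B _ _ phi 0 0 hc; rewrite !subrr; done.
Qed.

Lemma Dpos (R : realType) (E : normedModType R) (g : E -> R) g' Z X :
  class_F g g' -> Z <> X -> 0 < Dg g g' Z X.
Proof.
case=> sc _ _ der ZX.
set m := 2^-1 *: Z + (1 - 2^-1) *: X.
have h2 : 0 < (2^-1 : R) < 1.
  by apply/andP; split; [rewrite invr_gt0 | rewrite invf_lt1 // ltr1n].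
have gm := sc Z X 2^-1 ZX h2.
have mX : m <> X.
  move=> mX; apply: ZX.
  have : m - X = 0 by rewrite mX subrr.
  rewrite /m scalerBl scale1r addrA addrAC addrK.
  rewrite -scalerBr => /eqP; rewrite scaler_eq0 invr_eq0 pnatr_eq0 /=.
  by rewrite subr_eq0 => /eqP.
set h := Z - X.
have cv := cvg_dnbhs_at_right (der X h).
have le : g' X h <= 2 * (g m - g X).
  suff : [set x : R | x <= 2 * (g m - g X)] (g' X h) by [].
  apply: (closed_cvg (F := 0^'+) (u_ := fun t : R => t^-1 * (g (X + t *: h) - g X))  _ (@closed_le R (2 * (g m - g X))) _ _ cv).
  near=> t.
  have t0 : 0 < t by near: t; exact: nbhs_right_gt.
  have t1 : t < 2^-1 by near: t; apply: nbhs_right_lt; rewrite invr_gt0.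
  have h2t : 0 < 2 * t < 1.
    apply/andP; split; first by rewrite mulr_gt0.
    by rewrite -ltr_pdivlMl // mulr1.
  have := sc m X (2 * t) mX h2t.
  have -> : (2 * t) *: m + (1 - 2 * t) *: X = X + t *: h.
    have e1 : (1 - 2^-1 : R) = 2^-1 by field.
    have e2 : (2 * t * 2^-1 : R) = t by field.
    rewrite /m /h e1 scalerDr !scalerA e2 -addrA -scalerDl.
    rewrite scalerBr [in RHS]addrCA; congr (_ + _).
    rewrite (_ : t + (1 - 2 * t) = 1 - t); last by lra.
    by rewrite scalerBl scale1r.
  move=> lt.
  rewrite /= mulrC ler_pdivrMr //.
  nra.
Unshelve. all: try by end_near.
rewrite /Dg -/h; move: gm; rewrite -/m => gm; lra.
Qed.

Arguments int_add {R Y C a c}.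
Arguments int_scale {R Y C s c}.
Arguments cone_add {R Y C a b}.
Arguments Dpos {R E g g' Z X}.
Arguments clin_B {R E phi u v}.
Arguments clin_0 {R E phi}.

Lemma zA (V : zmodType) (a b c d : V) : a + c - (- b + d + c) = a - d + b.
Proof. by rewrite [- b + d + c]addrC addrKA opprD opprK [b - d]addrC addrA. Qed.
Lemma zB (V : zmodType) (P Q S : V) : P + (Q - S) - Q = - S + P.
Proof. by rewrite addrCA addrAC subrr add0r addrC. Qed.
Lemma zC (V : zmodType) (u a b c d : V) : u + (a - b - (c - d)) = u + a - b - (c - d).
Proof. by rewrite !addrA. Qed.

Theorem proposition3p6 (R : realType) (E Y : completeNormedModType R)
  (K : set E) (C : set Y) (f : E -> E -> Y) (T : E -> set E)
  (g : E -> R) (g' : E -> E -> R)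
  (v0 : E) (delta theta betahat betatilde eps : R)
  (beta gamma : nat -> R) (e : nat -> Y) (ebar : Y)
  (v x z y w : nat -> E) (ell : nat -> nat) (k : nat) :
  K !=set0 -> closed K -> cvx_set K ->
  good_cone C ->
  class_F g g' -> H1 g g' -> H2 g g' -> H3 g g' -> H4 g g' ->
  (forall u, f u u = 0) -> B2 f -> (forall u, C_convex C (f u)) -> B4 K T g g' ->
  K v0 -> 0 < delta < 1 -> 0 < theta < 1 ->
  0 < betahat -> betahat <= betatilde ->
  (forall j, betahat <= beta j <= betatilde) ->
  0 < eps <= 1 -> (forall j, eps <= gamma j <= 1) ->
  (forall j, interior C (e j)) -> e @ \oo --> ebar -> interior C ebar ->
  seml_upto K C f T g g' v0 delta theta beta gamma e v x z y w ell k ->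
  (exists l : nat, armijo C f g g' (beta k) delta theta (e k) (x k) (z k) l) /\
  (forall l : nat,
     armijo C f g g' (beta k) delta theta (e k) (x k) (z k) l ->
     (forall l', (l' < l)%N -> ~ armijo C f g g' (beta k) delta theta (e k) (x k) (z k) l') ->
     x k <> z k -> ~ C (- f (ypt theta (x k) (z k) l) (x k))).
Proof.
move=> _ _ _ gC cF _ _ _ _ f0 B2f Cc _ _ dlt th bh _ hb _ _ eint _ _ [_ [Hk _]].
have [_ [TX _] [_ nmin] _] := Hk k (leqnn k).
have cl : is_clin (g' (x k)) by case: cF.
have b0 : 0 < beta k by have /andP[h _] := hb k; exact: lt_le_trans h.
have eI := eint k.
have gC' := gC; case: gC' => Ccl _ Csc _ _.
have d0 : 0 < delta by case/andP: dlt.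
have d1 : delta < 1 by case/andP: dlt.
have t0 : 0 < theta by case/andP: th.
have t1 : theta < 1 by case/andP: th.
set X := x k; set Z := z k; set b := beta k; set ek := e k.
set D := Dg g g' Z X.
have FA : ~ interior C (b *: f X Z + D *: ek).
  move=> HI; apply: nmin; exists X; split => //.
  suff -> : zobj f g g' b ek X Z - zobj f g g' b ek X X = b *: f X Z + D *: ek by [].
  have -> : D = (g Z - g' X Z) - (g X - g' X X).
    rewrite /D /Dg (clin_B cl); lra.
  by rewrite /zobj f0 scaler0 add0r !scalerBl zC.
split; last first.
  move=> l arm _ XZ CN; apply: arm.
  have tp : 0 < theta ^+ l := exprn_gt0 _ t0.
  have tl : theta ^+ l <= 1 := exprn_ile1 _ (ltW t0) (ltW t1).
  set t := theta ^+ l.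
  set yy := ypt theta X Z l.
  have cc : C (t *: f yy Z + (1 - t) *: f yy X).
    have := Cc yy Z X t; rewrite -/(ypt theta X Z l) -/yy f0 subr0; apply.
    by rewrite (ltW tp) tl.
  have Dp : 0 < D := Dpos cF (nesym XZ).
  have -> : - (b *: f yy X) + b *: f yy Z + (delta * D) *: ek =
     (b / t) *: (t *: f yy Z + (1 - t) *: f yy X + - f yy X) + (delta * D) *: ek.
    congr (_ + _).
    rewrite !scalerDr !scalerA divfK ?gt_eqF //.
    rewrite (_ : b / t * (1 - t) = b / t - b); last by field; rewrite gt_eqF.
    by rewrite scalerBl scalerN zB.
  apply: (int_add gC _ (int_scale gC _ eI)); last exact: mulr_gt0.
  apply: Csc; first by rewrite divr_ge0 // ltW.
  exact: cone_add gC cc CN.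
case: (pselect (Z = X)) => [ZX | ZX].
  have D0 : D = 0.
    by rewrite /D ZX /Dg !subrr (clin_0 cl) subrr.
  exists 0%N; rewrite /armijo.
  have -> : ypt theta X Z 0 = Z by rewrite /ypt expr0 subrr scale0r addr0 scale1r.
  move: FA; rewrite -/D D0 ZX !f0 !scaler0 scale0r mulr0 scale0r.
  by rewrite oppr0 !add0r.
have Dp : 0 < D := Dpos cF ZX.
have FB : ~ C (b *: f X Z + (delta * D) *: ek).
  move=> Cp; apply: FA.
  have -> : b *: f X Z + D *: ek =
      (b *: f X Z + (delta * D) *: ek) + ((1 - delta) * D) *: ek.
    by rewrite -addrA -scalerDl; congr (_ + (_ *: _)); ring.
  apply: (int_add gC Cp (int_scale gC _ eI)).
  by rewrite mulr_gt0 // subr_gt0.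
have : nbhs (b *: f X Z + (delta * D) *: ek) (~` C).
  by apply: open_nbhs_nbhs; split => //; exact: closed_openC.
case/nbhsNP => r r0 Hr.
set A := [set u : E | `|u| <= `|X| + `|Z|].
have bA : bnd A by exists (`|X| + `|Z|).
have e0 : 0 < r / (2 * b) by rewrite divr_gt0 // mulr_gt0.
have [dd [dd0 HB]] := B2f A bA _ e0.
have q0 : 0 < dd / (`|Z - X| + 1).
  by rewrite divr_gt0 // ltr_wpDl.
have thn : `|theta| < 1 by rewrite gtr0_norm.
have := cvg_expr thn.
move/cvgr0Pnorm_lt => /(_ _ q0) [N _ HN].
have {HN} HN := HN N (leqnn N).
exists N => HI.
set t := theta ^+ N in HN *.
have tp : 0 < t := exprn_gt0 _ t0.
have tl : t <= 1 := exprn_ile1 _ (ltW t0) (ltW t1).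
set yy := ypt theta X Z N.
have Xy : `|X - yy| < dd.
  have -> : X - yy = t *: (X - Z).
    rewrite /yy /ypt -/t scalerBl scale1r scalerBr opprD opprB.
    by rewrite addrCA [X + (_ - _)]addrCA subrr addr0 addrC.
  move: HN; rewrite ger0_norm ?ltW // ltr_pdivlMr ?ltr_wpDl // => HN.
  rewrite normrZ ger0_norm ?ltW // distrC.
  have := normr_ge0 (Z - X); nra.
have Ay : A yy.
  rewrite /A /= /yy /ypt -/t.
  apply: (le_trans (ler_normD _ _)).
  rewrite !normrZ (ger0_norm (ltW tp)) ger0_norm; last by rewrite subr_ge0.
  have := normr_ge0 X; have := normr_ge0 Z; nra.
have AX : A X by rewrite /A /= lerDl.
have AZ : A Z by rewrite /A /= lerDr.
have H1 := HB X Z yy Z AX AZ Ay AZ Xy.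
have H2 := HB yy X X X Ay AX AX AX.
apply: (Hr _ _ (interior_subset HI)).
rewrite zA.
have {}H1 : `|f X Z - f yy Z| < r / (2 * b).
  by apply: H1; rewrite subrr normr0.
have {}H2 : `|f yy X - f X X| < r / (2 * b).
  by apply: H2; [rewrite distrC | rewrite subrr normr0].
rewrite f0 subr0 in H2.
rewrite -/yy -scalerBr.
apply: le_lt_trans (ler_normD _ _) _.
rewrite !normrZ gtr0_norm //.
rewrite (_ : r = b * (r / (2 * b)) + b * (r / (2 * b))); last first.
  by field; rewrite gt_eqF.
by apply: ltrD; rewrite ltr_pM2l.
Qed.
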